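(* Let $k>500$, $\ln^3k/\sqrt k<\delta<1/100$, $d=300\lceil\ln k\rceil$, $\varepsilon=50\delta/\lceil\ln k\rceil$, and let $c^1,\dots,c^k$ be sampled independently and uniformly from the grid $G$, with data set $X$ as in the context. Then with probability at least $1-1/k$ the following holds: for every path $\pi$ of length at most $\log_2k/4$, either (a) $|F_{u(\pi)}|\le\sqrt k$, or (b) every threshold cut $(i,\xi)$ that separates at least two data points of $X\cap u(\pi)$ damages at least $\varepsilon|F_{u(\pi)}|/2$ centers of $F_{u(\pi)}$.
   Context: $G$ is the set of points of $[0,1]^d$ all of whose coordinates are nonnegative integer multiples of $\varepsilon$; $\mathbf{1}=(1,\dots,1)\in\mathbb{R}^d$. The data set (multiset) $X$ consists, for each $i$, of $k^2\lceil\ln^3k\rceil$ copies of $c^i$ together with the two points $c^i+\varepsilon\mathbf{1}$ and $c^i-\varepsilon\mathbf{1}$. A path $\pi$ is a finite sequence of triples $(i_j,\xi_j,\lambda_j)$ with $i_j\in\{1,\dots,d\}$, $\xi_j\in\mathbb{R}$, $\lambda_j\in\{\pm1\}$; its length is the number of triples; $u(\pi)$ is the set of $y\in\mathbb{R}^d$ such that for each $j$, $y_{i_j}\le\xi_j$ if $\lambda_j=-1$ and $y_{i_j}>\xi_j$ if $\lambda_j=+1$. A center $c^i\in u(\pi)$ is damaged in $u(\pi)$ if $c^i+\varepsilon\mathbf{1}\notin u(\pi)$ or $c^i-\varepsilon\mathbf{1}\notin u(\pi)$; $F_{u(\pi)}$ is the set (indexed by $i$) of centers $c^i\in u(\pi)$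 that are not damaged in $u(\pi)$. A threshold cut $(i,\xi)$ separates two points if exactly one of them satisfies $y_i\le\xi$; it damages a center $c$ if it separates $c$ from $c+\varepsilon\mathbf 1$ or from $c-\varepsilon\mathbf 1$. *)

(* Defs.v *)
From HB Require Import structures.
From mathcomp Require Import all_boot all_order all_algebra.
From mathcomp Require Import boolp reals exp.
Set Implicit Arguments. Unset Strict Implicit. Unset Printing Implicit Defensive.
Import Order.TTheory GRing.Theory Num.Theory.
Local Open Scope ring_scope.

Section Defs.
Variable R : realType.

Definition lnc (k : nat) : nat := `|Num.ceil (ln (k%:R : R))|%N.
Definition dimk (k : nat) : nat := (300 * lnc k)%N.
Definition epsk (k : nat) (delta : R) : R := 50 * delta / (lnc k)%:R.
(* number of grid values j*eps (j nat) lying in [0,1]: floor(1/eps) + 1 *)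
Definition gridN (k : nat) (delta : R) : nat :=
  (`|Num.floor (epsk k delta)^-1|%N).+1.

(* a sample of k centers: each coordinate is an index j, standing for j*eps *)
Definition sample (k : nat) (delta : R) :=
  {ffun 'I_k -> {ffun 'I_(dimk k) -> 'I_(gridN k delta)}}.

Definition center k delta (c : sample k delta) (i : 'I_k) : 'I_(dimk k) -> R :=
  fun a => (c i a : nat)%:R * epsk k delta.

Definition dpoint k delta (c : sample k delta) (i : 'I_k) (s : 'I_3)
  : 'I_(dimk k) -> R :=
  fun a => center c i a + ((s : nat)%:R - 1) * epsk k delta.

(* path: triples (coordinate, threshold, lambda) with lambda = true for +1 *)
Definition path_of (d : nat) := seq ('I_d * R * bool).

Definition in_u d (pi : path_of d) (y : 'I_d -> R) : bool :=
  all (fun t => if t.2 then t.1.2 < y t.1.1 else y t.1.1 <= t.1.2) pi.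

Definition damaged_in k delta (c : sample k delta) (pi : path_of (dimk k))
  (i : 'I_k) : bool :=
  ~~ in_u pi (dpoint c i (inord 2)) || ~~ in_u pi (dpoint c i (inord 0)).

Definition Fu k delta (c : sample k delta) (pi : path_of (dimk k)) : {set 'I_k} :=
  [set i | in_u pi (center c i) && ~~ damaged_in c pi i].

Definition separates d (a : 'I_d) (xi : R) (x y : 'I_d -> R) : bool :=
  (x a <= xi) != (y a <= xi).

Definition cut_damages k delta (c : sample k delta) (a : 'I_(dimk k)) (xi : R)
  (i : 'I_k) : bool :=
  separates a xi (center c i) (dpoint c i (inord 2)) ||
  separates a xi (center c i) (dpoint c i (inord 0)).

Definition good_event k delta (c : sample k delta) : Prop :=
  forall pi : path_of (dimk k),
    (size pi)%:R <= ln (k%:R : R) / ln 2 / 4 ->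
    (#|Fu c pi|%:R <= Num.sqrt (k%:R : R)) \/
    (forall (a : 'I_(dimk k)) (xi : R),
       (exists i1 s1 i2 s2,
          [/\ in_u pi (dpoint c i1 s1), in_u pi (dpoint c i2 s2)
            & separates a xi (dpoint c i1 s1) (dpoint c i2 s2)]) ->
       epsk k delta * #|Fu c pi|%:R / 2 <=
         #|[set i in Fu c pi | cut_damages c a xi i]|%:R).

End Defs.

(* Main.v *)
Require Import Defs.
From HB Require Import structures.
From mathcomp Require Import all_boot all_order all_algebra.
From mathcomp Require Import boolp reals exp sequences.
From mathcomp Require Import ring lra zify.
Import Order.TTheory GRing.Theory Num.Theory.
Set Implicit Arguments. Unset Strict Implicit. Unset Printing Implicit Defensive.
Local Open Scope ring_scope.

Lemma sum_ind_card (I : finType) (P : pred I) :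
  (\sum_i ((P i : nat)))%N = #|[set i | P i]|.
Proof.
rewrite cardsE -sum1_card [RHS]big_mkcond /=.
by apply: eq_bigr => i _; rewrite unfold_in; case: (P i).
Qed.

Lemma sum_ind_cardR (R : realType) (I : finType) (P : pred I) :
  \sum_i ((P i : nat)%:R : R) = #|[set i | P i]|%:R.
Proof. by rewrite -natr_sum sum_ind_card. Qed.

Lemma chernoff (R : realType) (V : finType) (inP hitP : pred V) (k n : nat) (eps s : R) :
  (forall v, hitP v -> inP v) ->
  (#|[set v | inP v]| <= n * #|[set v | hitP v]|)%N ->
  0 < eps -> eps <= 1/8 -> n%:R * eps <= 1 + eps ->
  #|[set c : {ffun 'I_k -> V} | (s < #|[set i | inP (c i)]|%:R) &&
      (#|[set i | hitP (c i)]|%:R < eps * #|[set i | inP (c i)]|%:R / 2)]|%:R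
  <= expR (- (eps/25 * s)) * (#|V|%:R) ^+ k.
Proof.
move=> hitin card_le eps0 eps8 neps.
pose g : R := 29 / 100 * eps.
pose W := fun v : V => expR (g * (inP v : nat)%:R - 1/2 * (hitP v : nat)%:R).
pose A := expR g. pose B : R := expR (- (1/2)).
have A1 : 1 <= A by rewrite /A -expR0 ler_expR /g; lra.
have Ag : A * (1 - g) <= 1.
  have := expR_ge1Dx (- g); rewrite -[X in _ <= X -> _]/(expR (- g)) expRN => h.
  have A0 : 0 < A by apply: expR_gt0.
  have h1 := mulfV (lt0r_neq0 A0); rewrite /A in h1 A0 *; move: h h1 A0; set y := (expR g)^-1; set x := expR g; nra.
have B3 : 1 - B >= 1/3.
  have := expR_ge1Dx (1/2 : R); rewrite /B expRN => h.
  have h0 : 0 < expR (1/2 : R) by apply: expR_gt0.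
  suff : (expR (1/2))^-1 <= 2/3 :> R by lra.
  have h1 := mulfV (lt0r_neq0 h0).
  have h2 : 0 < (expR (1/2 : R))^-1 by rewrite invr_gt0.
  move: h h1 h2; set y := (expR (1/2 : R))^-1; set x := expR (1/2 : R) => h h1 h2.
  nra.
have Wv : forall v, W v = 1 + (inP v : nat)%:R * (A - 1) - (hitP v : nat)%:R * (A * (1 - B)).
  move=> v; rewrite /W.
  case hv: (hitP v).
    rewrite (hitin v hv) /= !mulr1n !mulr1.
    have -> : 1 + 1 * (A - 1) - 1 * (A * (1 - B)) = A * B by ring.
    by rewrite /A /B -expRD.
  case: (inP v) => /=; rewrite ?mulr1n ?mulr0n ?mulr1 ?mulr0 ?subr0 ?add0r ?addr0.
    rewrite /A; ring.
  by rewrite expR0 !mul0r subr0 addr0.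
have SW : \sum_v W v <= #|V|%:R.
  under eq_bigr do rewrite Wv.
  rewrite big_split /= big_split /= sumrN sumr_const -!mulr_suml !sum_ind_cardR.
  rewrite (_ : #|xpredT| = #|V|) //.
  suff : #|[set v | inP v]|%:R * (A - 1) <= #|[set v | hitP v]|%:R * (A * (1 - B)) :> R.
    lra.
  have cle : #|[set v | inP v]|%:R <= n%:R * #|[set v | hitP v]|%:R :> R.
    by rewrite -natrM ler_nat.
  apply: (le_trans (y := n%:R * #|[set v | hitP v]|%:R * (A - 1))).
    by apply: ler_wpM2r => //; lra.
  rewrite mulrAC [X in _ <= X]mulrC; apply: ler_wpM2r => //.
  have A0 : 0 <= A by lra.
  have h1 : n%:R * (A - 1) <= n%:R * (A * g) by apply: ler_wpM2l => //; lra.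
  have h2 : n%:R * (A * g) = 29/100 * (A * (n%:R * eps)) by rewrite /g; ring.
  have h3 : A * (n%:R * eps) <= A * (1 + eps) by apply: ler_wpM2l.
  have h4 : A * eps <= A * (1/8) by apply: ler_wpM2l.
  have h5 : A * (1 - B) >= A * (1/3) by apply: ler_wpM2l.
  lra.
set Bad := [set c : {ffun 'I_k -> V} | _].
pose om := fun c : {ffun 'I_k -> V} => expR (- (eps / 25 * s)) * \prod_i W (c i).
have om0 : forall c, 0 <= om c by move=> c; rewrite /om -expR_sum -expRD expR_ge0.
have key : forall c, c \in Bad -> 1 <= om c.
  move=> c; rewrite inE => /andP [hs hh].
  rewrite /om -expR_sum -expRD; apply: le_trans (expR_ge1Dx _); rewrite lerDl.
  rewrite /W sumrB -!mulr_sumr !sum_ind_cardR.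
  move: hs hh; set m := #|[set i | inP (c i)]|%:R; set h := #|[set i | hitP (c i)]|%:R => hs hh.
  rewrite /g. nra.
have -> : #|Bad|%:R = \sum_(c in Bad) (1 : R) by rewrite sumr_const.
apply: (le_trans (y := \sum_(c in Bad) om c)); first by apply: ler_sum => c /key.
apply: (le_trans (y := \sum_c om c)).
  rewrite [X in _ <= X](bigID (mem Bad)) /= lerDl; apply: sumr_ge0 => c _; exact: om0.
rewrite /om -mulr_sumr; apply: ler_wpM2l; first exact: expR_ge0.
rewrite -(bigA_distr_bigA (fun (i : 'I_k) v => W v)) /= prodr_const card_ord.
apply: lerXn2r => //; last by rewrite nnegrE.
by rewrite nnegrE; apply: sumr_ge0 => v _; apply: expR_ge0.
Qed.
Definition stepT (d n : nat) := ('I_d * 'I_n.+1 * bool)%type.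
Definition stepOKv d n (st : stepT d n) (x : nat) : bool :=
  if st.2 then (st.1.2 <= x)%N else (x < st.1.2)%N.
Definition optOK d n (o : option (stepT d n)) (v : {ffun 'I_d -> 'I_n}) : bool :=
  if o is Some st then stepOKv st (v st.1.1) else true.
Definition ptype d n L := {ffun 'I_L -> option (stepT d n)}.
Definition inbox d n L (tau : ptype d n L) (v : {ffun 'I_d -> 'I_n}) : bool :=
  [forall j, optOK (tau j) v].
Definition feasible d n L (tau : ptype d n L) (b : 'I_d) (g : 'I_n) : bool :=
  [forall j, if tau j is Some st then (st.1.1 == b) ==> stepOKv st g else true].

Lemma card_box d n L (tau : ptype d n L) b g : feasible tau b g ->
  (#|[set v | inbox tau v]| <= n * #|[set v | inbox tau v && (v b == g)]|)%N.
Proof.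
move=> /forallP fe.
pose f := fun v : {ffun 'I_d -> 'I_n} => ([ffun a => if a == b then g else v a], v b).
have finj : {in [set v | inbox tau v] &, injective f}.
  move=> v w _ _ [] /ffunP e eb; apply/ffunP => a; have := e a; rewrite !ffunE.
  by case: eqP => [->|].
rewrite -(card_in_imset finj) mulnC -[n in (_ * n)%N]card_ord -[#|'I_n|]cardsT.
rewrite -cardsX; apply: subset_leq_card; apply/subsetP => p /imsetP [v].
rewrite !inE => /forallP iv -> /=.
have H : inbox tau [ffun a => if a == b then g else v a].
  apply/forallP => j; have := iv j; have := fe j; rewrite /optOK.
  case: (tau j) => // st; rewrite ffunE; case: eqP => // ->; by move=> /implyP h _; apply: h.
by rewrite H ffunE eqxx /= eqxx.
Qed.

Section Det.
Variable R : realType.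
Variables (k : nat) (delta : R).
Hypothesis eps0 : 0 < epsk k delta.
Local Notation eps := (epsk k delta).
Local Notation d := (dimk R k).
Local Notation n := (gridN k delta).

Definition thetaR (t : R) : int := Num.floor (t / eps).

Lemma in_u_int (pi : path_of R d) (y : 'I_d -> R) (j : 'I_d -> int) :
  (forall a, y a = (j a)%:~R * eps) ->
  in_u pi y = all (fun st => if st.2 then thetaR st.1.2 < j st.1.1
                             else j st.1.1 <= thetaR st.1.2) pi.
Proof.
move=> hy; apply: eq_all => st; rewrite hy /thetaR; case: st.2.
  by rewrite floor_lt_int ltr_pdivrMr.
by rewrite floor_ge_int ler_pdivlMr.
Qed.

Definition clampI (z : int) : 'I_n.+1 :=
  inord (if (z < 0)%R then 0%N else minn (absz z) n).
Definition zOf (st : 'I_d * R * bool) : int :=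
  if st.2 then thetaR st.1.2 + 2 else thetaR st.1.2.
Definition fst (st : 'I_d * R * bool) : stepT d n := (st.1.1, clampI (zOf st), st.2).

Lemma clampP (z : int) (lam : bool) (x : nat) (a : 'I_d) : (x < n)%N ->
  stepOKv (a, clampI z, lam) x = if lam then z <= x%:Z else x%:Z < z.
Proof.
move=> hx; rewrite /stepOKv /clampI /= inordK; last first.
  by case: ifP => _ //; rewrite ltnS geq_minr.
case: lam; case: ifP => hz; apply/idP/idP => h; lia.
Qed.

Definition tauOf L (pi : path_of R d) : ptype d n L :=
  [ffun j : 'I_L => nth None (map (fun st => Some (fst st)) pi) j].

Lemma inbox_tauOf L pi v : (size pi <= L)%N ->
  inbox (tauOf L pi) v = all (fun st => stepOKv (fst st) (v st.1.1)) pi.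
Proof.
move=> hL; apply/forallP/allP.
  move=> H st stin.
  have hj : (index st pi < L)%N by apply: leq_trans hL; rewrite index_mem.
  have := H (Ordinal hj); rewrite /optOK ffunE /= (nth_map st) ?index_mem //.
  by rewrite nth_index.
move=> H j; rewrite ffunE; case: (ltnP j (size pi)) => hj; last first.
  by rewrite nth_default ?size_map.
case: pi hL H hj => [//|x0 pi'] hL H hj.
rewrite (nth_map x0) //=; apply: H; exact: mem_nth.
Qed.

Lemma center_int (c : sample k delta) i a :
  center c i a = (((c i a : nat)%:Z))%:~R * eps.
Proof. by []. Qed.

Lemma dpoint_int (c : sample k delta) i (s : 'I_3) a :
  dpoint c i s a = (((c i a : nat)%:Z + (s : nat)%:Z - 1))%:~R * eps.
Proof. by rewrite /dpoint center_int !rmorphD rmorphN /=; ring. Qed.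

Lemma inord2 : ((inord 2 : 'I_3) : nat) = 2%N. Proof. by rewrite inordK. Qed.
Lemma inord0 : ((inord 0 : 'I_3) : nat) = 0%N. Proof. by rewrite inordK. Qed.

Lemma Fu_inbox L (c : sample k delta) pi i : (size pi <= L)%N ->
  (i \in Fu c pi) = inbox (tauOf L pi) (c i).
Proof.
move=> hL; rewrite inE /damaged_in negb_or !negbK inbox_tauOf //.
rewrite (in_u_int (j := fun a => ((c i a : nat)%:Z)) _ (center_int c i)).
rewrite (in_u_int (j := fun a => ((c i a : nat)%:Z + (2%N)%:Z - 1)) pi); last first.
  by move=> a; rewrite dpoint_int inord2.
rewrite (in_u_int (j := fun a => ((c i a : nat)%:Z + (0%N)%:Z - 1)) pi); last first.
  by move=> a; rewrite dpoint_int inord0.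
rewrite -!all_predI; apply: eq_all => st /=.
rewrite /fst clampP // /zOf; case: st.2.
  all: by apply/idP/idP => [/and3P [h1 h2 h3]|h]; [lia | apply/and3P; split; lia].
Qed.

Lemma feasible_tauOf L pi b g : (size pi <= L)%N ->
  feasible (tauOf L pi) b g = all (fun st => (st.1.1 == b) ==> stepOKv (fst st) g) pi.
Proof.
move=> hL; apply/forallP/allP.
  move=> H st stin.
  have hj : (index st pi < L)%N by apply: leq_trans hL; rewrite index_mem.
  have := H (Ordinal hj); rewrite ffunE /= (nth_map st) ?index_mem //.
  by rewrite nth_index.
move=> H j; rewrite ffunE; case: (ltnP j (size pi)) => hj; last first.
  by rewrite nth_default ?size_map.
case: pi hL H hj => [//|x0 pi'] hL H hj.
rewrite (nth_map x0) //=; apply: H; exact: mem_nth.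
Qed.

Lemma le_theta (j : int) t : (j%:~R * eps <= t) = (j <= thetaR t).
Proof. by rewrite /thetaR floor_ge_int ler_pdivlMr. Qed.

Lemma cut_dam (c : sample k delta) b xi i :
  ((c i b : nat)%:Z == thetaR xi) || ((c i b : nat)%:Z == thetaR xi + 1) ->
  cut_damages c b xi i.
Proof.
move=> h; rewrite /cut_damages /separates.
rewrite center_int !dpoint_int inord2 inord0 !le_theta.
case/orP: h => /eqP ->.
  rewrite lexx (_ : (thetaR xi + (2%N)%:Z - 1 <= thetaR xi) = false) //.
  by apply/negbTE; rewrite -ltNge; lia.
rewrite (_ : (thetaR xi + 1 <= thetaR xi) = false); last by apply/negbTE; rewrite -ltNge; lia.
by rewrite (_ : (thetaR xi + 1 + (0%N)%:Z - 1 <= thetaR xi) = true) ?orbT //; lia.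
Qed.

Lemma exists_g L (c : sample k delta) pi b xi i0 i1 s1 i2 s2 :
  (size pi <= L)%N -> i0 \in Fu c pi ->
  in_u pi (dpoint c i1 s1) -> in_u pi (dpoint c i2 s2) ->
  separates b xi (dpoint c i1 s1) (dpoint c i2 s2) ->
  exists g : 'I_n, feasible (tauOf L pi) b g &&
    (((g : nat)%:Z == thetaR xi) || ((g : nat)%:Z == thetaR xi + 1)).
Proof.
move=> hL hi0.
rewrite (in_u_int (j := fun a => ((c i1 a : nat)%:Z + (s1 : nat)%:Z - 1)) pi); last first.
  by move=> a; rewrite dpoint_int.
rewrite (in_u_int (j := fun a => ((c i2 a : nat)%:Z + (s2 : nat)%:Z - 1)) pi); last first.
  by move=> a; rewrite dpoint_int.
rewrite /separates !dpoint_int !le_theta.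
move: hi0; rewrite (Fu_inbox (L:=L)) // inbox_tauOf // => /allP h0 /allP h1 /allP h2 sep.
set T := thetaR xi.
set c0 : int := (c i0 b : nat)%:Z.
have c0n : (0 <= c0) && (c0 < n%:Z) by apply/andP; split; rewrite /c0 ?lez_nat ?ltz_nat //.
have key : forall j1 j2 : int, j1 <= T -> T < j2 -> -1 <= j1 -> j2 <= n%:Z ->
    (forall st, st \in pi -> st.1.1 = b -> if st.2 then thetaR st.1.2 < j1 else j1 <= thetaR st.1.2) ->
    (forall st, st \in pi -> st.1.1 = b -> if st.2 then thetaR st.1.2 < j2 else j2 <= thetaR st.1.2) ->
    exists g : 'I_n, feasible (tauOf L pi) b g &&
      (((g : nat)%:Z == T) || ((g : nat)%:Z == T + 1)).
  move=> j1 j2 hj1 hj2 hj1' hj2' f1 f2.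
  set gi : int := if c0 <= T then T else T + 1.
  have gin : (0 <= gi) && (gi < n%:Z).
    by rewrite /gi; case: ifP => hc; apply/andP; split; move/andP: c0n => [? ?]; lia.
  have gl : (absz gi < n)%N by move/andP: gin => [? ?]; lia.
  exists (Ordinal gl); apply/andP; split; last first.
    by rewrite /= /gi; case: ifP => hc; apply/orP; [left|right]; apply/eqP; move/andP: gin => [? ?]; lia.
  rewrite feasible_tauOf //; apply/allP => st stin; apply/implyP => /eqP stb.
  have := h0 st stin; rewrite stb /fst !clampP //= -/c0.
  have := f1 st stin stb; have := f2 st stin stb.
  move/andP: c0n => [c00 c0n']; rewrite /zOf /gi; case: (st.2) => /=; case: ifP => hc; lia.
have bnd : forall (i : 'I_k) (s : 'I_3), (-1 <= (c i b : nat)%:Z + (s : nat)%:Z - 1) &&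
                                   ((c i b : nat)%:Z + (s : nat)%:Z - 1 <= n%:Z).
  move=> i s; have := ltn_ord (c i b); have := ltn_ord s.
  by move=> ? ?; apply/andP; split; lia.
have F1 : forall st, st \in pi -> st.1.1 = b -> if st.2 then thetaR st.1.2 < (c i1 b : nat)%:Z + (s1 : nat)%:Z - 1 else (c i1 b : nat)%:Z + (s1 : nat)%:Z - 1 <= thetaR st.1.2.
  by move=> st /h1; move=> + <-.
have F2 : forall st, st \in pi -> st.1.1 = b -> if st.2 then thetaR st.1.2 < (c i2 b : nat)%:Z + (s2 : nat)%:Z - 1 else (c i2 b : nat)%:Z + (s2 : nat)%:Z - 1 <= thetaR st.1.2.
  by move=> st /h2; move=> + <-.
move: sep (bnd i1 s1) (bnd i2 s2).
case: (leP ((c i1 b : nat)%:Z + (s1 : nat)%:Z - 1) T) => ha;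
case: (leP ((c i2 b : nat)%:Z + (s2 : nat)%:Z - 1) T) => hb //= _ /andP [? ?] /andP [? ?].
  exact: (key _ _ ha hb _ _ F1 F2).
exact: (key _ _ hb ha _ _ F2 F1).
Qed.

Definition mcnt L (tau : ptype d n L) (c : sample k delta) : R :=
  #|[set i | inbox tau (c i)]|%:R.
Definition hcnt L (tau : ptype d n L) b g (c : sample k delta) : R :=
  #|[set i | inbox tau (c i) && (c i b == g)]|%:R.

Lemma good_of L (c : sample k delta) :
  (forall pi : path_of R d, (size pi)%:R <= ln (k%:R : R) / ln 2 / 4 -> (size pi <= L)%N) ->
  (forall (tau : ptype d n L) b g, feasible tau b g ->
     Num.sqrt (k%:R : R) < mcnt tau c -> eps * mcnt tau c / 2 <= hcnt tau b g c) ->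
  good_event c.
Proof.
move=> HL H pi hsz; have hL := HL pi hsz.
set tau := tauOf L pi.
have Fe : Fu c pi = [set i | inbox tau (c i)].
  by apply/setP => i; rewrite [RHS]inE (Fu_inbox (L:=L)).
case: (leP #|Fu c pi|%:R (Num.sqrt (k%:R : R))) => hF; [left => // | right].
move=> a xi [i1 [s1 [i2 [s2 [u1 u2 sep]]]]].
have : (0 < #|Fu c pi|)%N.
  rewrite -(ltr0n R); apply: le_lt_trans hF; exact: sqrtr_ge0.
rewrite card_gt0 => /set0Pn [i0 hi0].
have [g /andP [fe hg]] := exists_g hL hi0 u1 u2 sep.
have := H tau a g fe; rewrite /mcnt -Fe => /(_ hF) hh.
apply: (le_trans hh); rewrite /hcnt ler_nat; apply: subset_leq_card.
apply/subsetP => i; rewrite !inE => /andP [ib /eqP cg].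
have hi : i \in Fu c pi by rewrite Fe inE.
move: hi; rewrite inE => ->; apply: cut_dam; by rewrite cg.
Qed.

End Det.
Lemma card_le_sum (T P : finType) (A : {set T}) (B : P -> {set T}) :
  (forall c, c \in A -> exists p, c \in B p) -> (#|A| <= \sum_p #|B p|)%N.
Proof.
move=> H.
have e : forall S : {set T}, #|S| = (\sum_c ((c \in S) : nat))%N.
  move=> S; rewrite -sum1_card [RHS](bigID (mem S)) /= [X in (_ + X)%N]big1 ?addn0.
    by apply: eq_bigr => c ->.
  by move=> c /negbTE ->.
rewrite e; under [X in (_ <= X)%N]eq_bigr do rewrite e.
rewrite exchange_big /=; apply: leq_sum => c _.
case cA: (c \in A) => //=; have [p cp] := H c cA.
by rewrite (bigD1 p) //= cp.
Qed.

Lemma ln2_ge (R : realType) : 1/2 <= ln (2 : R).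
Proof.
have h := expR_ge1Dx (- (1/2) : R); rewrite expRN in h.
have h0 : 0 < expR (1/2 : R) by apply: expR_gt0.
have e2 : expR (1/2 : R) <= 2.
  have h1 := mulfV (lt0r_neq0 h0).
  have h2 : 0 < (expR (1/2 : R))^-1 by rewrite invr_gt0.
  move: h h1 h2; set y := (expR (1/2 : R))^-1; set x := expR (1/2 : R) => h h1 h2.
  nra.
rewrite -[X in X <= _](expRK (1/2 : R)) ler_ln // posrE //.
Qed.

Lemma ln_nat_ge (R : realType) (k m : nat) : (2 ^ m <= k)%N -> (m%:R / 2 : R) <= ln (k%:R : R).
Proof.
move=> h.
have k0 : (0 < k)%N by apply: leq_trans h; rewrite expn_gt0.
have : ln ((2 ^ m)%:R : R) <= ln (k%:R : R).
  rewrite ler_ln ?posrE ?ltr0n ?expn_gt0 // ler_nat //.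
rewrite natrX lnXn // => h2; apply: le_trans h2.
rewrite -mulr_natr; have := ln2_ge R; have : 0 <= m%:R :> R by [].
move=> *; nra.
Qed.

Lemma num_core (R : realType) (x sk lc de nn L : R) :
  6 <= x -> 0 < de -> x ^+ 3 < de * sk -> de < 1/100 -> x <= lc -> lc <= x + 1 ->
  1 <= nn -> (nn - 1) * (50 * de) <= lc -> 0 <= L -> L <= x / 2 ->
  [/\ 300 * lc <= sk ^+ 2, nn <= sk ^+ 2, 1 + 300 * lc * (nn + 1) * 2 <= sk ^+ 2
    & (L + 3) * x <= 50 * de / lc / 25 * sk].
Proof.
move=> x6 de0 hx de1 xl lx n1 hn L0 Lx.
have x3 : x ^+ 3 = x * x * x by rewrite !exprS expr0 mulr1 mulrA.
have x30 : 216 <= x ^+ 3 by rewrite x3; nra.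
have sk0 : 0 < sk by nra.
have hs : 100 * x ^+ 3 < sk by nra.
have hs2 : 36 * x <= x ^+ 3.
  rewrite x3; have : 36 <= x * x by nra.
  move=> h; have h2 : 36 * x <= x * x * x by apply: ler_wpM2r; lra.
  lra.
have sk2 : sk ^+ 2 = sk * sk by rewrite expr2.
have sksq : 100 * sk <= sk ^+ 2 by rewrite sk2; apply: ler_wpM2r; lra.
have lc0 : 0 < lc by lra.
split.
- lra.
- have h1 : (nn - 1) * (50 * de) < sk * (50 * de) by nra.
  have h2 : nn - 1 < sk by rewrite ltr_pM2r in h1 => //; nra.
  lra.
- pose A := lc * (nn - 1).
  have A0 : 0 <= A by rewrite /A; nra.
  have hA1 : A * (50 * de) <= lc * lc by rewrite /A -mulrA; apply: ler_wpM2l => //; lra.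
  have l2 : lc * lc <= 4 * (x * x) by nra.
  have hA2' : A * (50 * de) * x <= lc * lc * x by apply: ler_wpM2r; lra.
  have hA2'' : lc * lc * x <= 4 * (x * x) * x by apply: ler_wpM2r; lra.
  have hA2 : A * (50 * de) * x <= 4 * x ^+ 3 by rewrite x3; lra.
  have hA3 : (A * 50 * x) * de < (4 * sk) * de by nra.
  have hA4 : A * 50 * x < 4 * sk by rewrite ltr_pM2r in hA3.
  have hA5 : A * 300 <= A * 50 * x by nra.
  have -> : 1 + 300 * lc * (nn + 1) * 2 = 1 + 600 * A + 1200 * lc by rewrite /A; ring.
  nra.
- have -> : 50 * de / lc / 25 * sk = (2 * de * sk) / lc by field; lra.
  rewrite ler_pdivlMr //.
  have h1 : (L + 3) * x <= x * x by nra.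
  have h2 : x * x * lc <= x * x * (x + 1) by apply: ler_wpM2l => //; nra.
  rewrite x3 in hx; nra.
Qed.

Lemma final_ineq (R : realType) (K sk lc nn x de : R) (L : nat) :
  K = sk ^+ 2 -> 0 < K -> expR x = K -> 0 <= lc -> 1 <= nn ->
  300 * lc <= sk ^+ 2 -> nn <= sk ^+ 2 -> 1 + 300 * lc * (nn + 1) * 2 <= sk ^+ 2 ->
  (L%:R + 3) * x <= 50 * de / lc / 25 * sk ->
  K * ((1 + 300 * lc * (nn + 1) * 2) ^+ L * (300 * lc) * nn)
    * expR (- (50 * de / lc / 25 * sk)) <= 1.
Proof.
move=> K2 K0 xK lc0 n1 dk nk Qk fin.
rewrite -K2 in dk nk Qk.
have Q0 : 0 <= 1 + 300 * lc * (nn + 1) * 2.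
  have : 0 <= lc * (nn + 1) by apply: mulr_ge0; lra.
  lra.
have le1 : K * ((1 + 300 * lc * (nn + 1) * 2) ^+ L * (300 * lc) * nn) <= K ^+ (L + 3).
  have -> : K ^+ (L + 3) = K * (K ^+ L * K * K) by rewrite exprD; ring.
  apply: ler_wpM2l; first exact: ltW.
  apply: ler_pM.
  - apply: mulr_ge0; [exact: exprn_ge0|lra].
  - lra.
  - apply: ler_pM; [exact: exprn_ge0|lra| |lra].
    by apply: lerXn2r; rewrite ?nnegrE //; lra.
  - lra.
have KE : K ^+ (L + 3) = expR ((L + 3)%:R * x) by rewrite expRM_natl xK.
apply: le_trans (ler_wpM2r (expR_ge0 _) le1) _.
rewrite KE -expRD expR_le1 natrD.
lra.
Qed.

Definition Lmax (R : realType) (k : nat) : nat := `|Num.floor (ln (k%:R : R) / ln 2 / 4)|%N.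

Lemma numeric (R : realType) (k : nat) (delta : R) :
  (500 < k)%N -> ln (k%:R : R) ^+ 3 / Num.sqrt (k%:R : R) < delta -> delta < 1 / 100 ->
  [/\ 0 < epsk k delta, epsk k delta <= 1/8,
      (gridN k delta)%:R * epsk k delta <= 1 + epsk k delta,
      (forall m : nat, m%:R <= ln (k%:R : R) / ln 2 / 4 -> (m <= Lmax R k)%N) &
      k%:R * (((dimk R k * (gridN k delta).+1 * 2).+1)%:R ^+ Lmax R k
               * (dimk R k)%:R * (gridN k delta)%:R)
        * expR (- (epsk k delta / 25 * Num.sqrt (k%:R : R))) <= 1].
Proof.
move=> hk hd1 hd2.
set x := ln (k%:R : R); set sk := Num.sqrt (k%:R : R).
have K0 : (0 : R) < k%:R by rewrite ltr0n; apply: leq_trans hk.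
have x4 : 4 <= x.
  have := @ln_nat_ge R k 8 (leq_trans _ (ltnW hk)); rewrite /x => h.
  have : (8%:R / 2 : R) = 4 by lra.
  move=> e; rewrite -e; exact: h.
have sk0 : 0 < sk by rewrite sqrtr_gt0.
have skk : sk ^+ 2 = k%:R by rewrite sqr_sqrtr // ltW.
have x30 : 0 < x ^+ 3 by rewrite exprn_gt0 //; lra.
have hx : x ^+ 3 < delta * sk by rewrite -ltr_pdivrMr.
have de0 : 0 < delta by apply: lt_trans hd1; rewrite divr_gt0.
have x6 : 6 <= x.
  have hs : 100 * x ^+ 3 < sk by nra.
  have x3 : x ^+ 3 = x * x * x by rewrite !exprS expr0 mulr1 mulrA.
  have : 64 <= x ^+ 3 by rewrite x3; nra.
  move=> h64.
  have : (4096 : R) <= k%:R by rewrite -skk expr2; nra.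
  rewrite (_ : (4096 : R) = (2 ^ 12)%:R); last by rewrite natrX.
  rewrite ler_nat => /ln_nat_ge h.
  have := h R; rewrite -/x; rewrite (_ : 12%:R = (12 : R)) //; lra.
set lc : R := (lnc R k)%:R.
have lce : lc = (Num.ceil x)%:~R.
  rewrite /lc /lnc natr_absz ger0_norm // ceil_ge0 -/x; lra.
have xl : x <= lc by rewrite lce ceil_ge.
have lx : lc <= x + 1 by have := ceilB1_lt x; rewrite lce intrD; lra.
have lc0 : 0 < lc by lra.
have epsE : epsk k delta = 50 * delta / lc by [].
have eps0 : 0 < epsk k delta by rewrite epsE divr_gt0 //; lra.
set nn : R := (gridN k delta)%:R.
have nnE : nn = (Num.floor (epsk k delta)^-1)%:~R + 1.
  rewrite /nn /gridN -addn1 natrD natr_absz ger0_norm //.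
  by rewrite floor_ge0 invr_ge0 ltW.
have nnle : nn <= (epsk k delta)^-1 + 1 by rewrite nnE lerD2r floor_le.
have n1 : 1 <= nn.
  rewrite nnE; have : (0:R) <= (Num.floor (epsk k delta)^-1)%:~R by rewrite ler0z floor_ge0 invr_ge0 ltW.
  lra.
have hn : (nn - 1) * (50 * delta) <= lc.
  have : (nn - 1) * epsk k delta <= 1.
    have h0 : nn - 1 <= (epsk k delta)^-1 by lra.
    have := ler_wpM2r (ltW eps0) h0 => h.
    by rewrite mulVf ?lt0r_neq0 // in h.
  by rewrite epsE mulrA ler_pdivrMr // mul1r.
set L := Lmax R k.
have y0 : 0 <= x / ln 2 / 4.
  have := ln2_ge R => ?; apply: divr_ge0 => //; apply: divr_ge0; lra.
have Le : (L%:R : R) = (Num.floor (x / ln 2 / 4))%:~R.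
  by rewrite /L /Lmax natr_absz ger0_norm // floor_ge0.
have Lx : (L%:R : R) <= x / 2.
  rewrite Le; apply: le_trans (floor_le _) _.
  have := ln2_ge R => h2.
  have := ln2_ge R => h2l.
  have l0 : 0 < ln (2 : R) by lra.
  have : x / ln 2 <= 2 * x by rewrite ler_pdivrMr //; nra.
  lra.
have [dk nk Qk fin] := num_core x6 de0 hx hd2 xl lx n1 hn (ler0n _ L) Lx.
split => //.
- rewrite epsE; rewrite ler_pdivrMr //; lra.
- have h := ler_wpM2r (ltW eps0) nnle.
  rewrite mulrDl mulVf ?lt0r_neq0 // mul1r in h.
  exact: h.
- move=> m hm; have h : (m%:Z <= Num.floor (x / ln 2 / 4)) by rewrite floor_ge_int.
  rewrite /L /Lmax -/x; move: h; generalize (Num.floor (x / ln 2 / 4)) => z h; clear -h; lia.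
- have DE : ((dimk R k)%:R : R) = 300 * lc by rewrite /dimk natrM.
  have QE : (((dimk R k * (gridN k delta).+1 * 2).+1)%:R : R) = 1 + 300 * lc * (nn + 1) * 2.
    by rewrite -addn1 natrD !natrM -DE -addn1 natrD addrC.
  rewrite QE DE -/nn -/L epsE.
  apply: (final_ineq (sk := sk) (x := x)) => //.
  by rewrite /x lnK // posrE.
Qed.

Unset Implicit Arguments.

Theorem lemma9 (R : realType) (k : nat) (delta : R) :
  (500 < k)%N ->
  ln (k%:R : R) ^+ 3 / Num.sqrt (k%:R : R) < delta ->
  delta < 1 / 100 ->
  (1 - 1 / k%:R) * #|[set: sample k delta]|%:R <=
    #|[set c : sample k delta | `[< good_event c >] ]|%:R :> R.
Proof.
move=> hk hd1 hd2.
have [eps0 eps8 neps HL fin] := numeric hk hd1 hd2.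
set eps := epsk k delta in eps0 eps8 neps fin *.
set n := gridN k delta in neps fin *.
set d := dimk R k in fin *.
set L := Lmax R k in HL fin *.
set sk := Num.sqrt (k%:R : R) in fin *.
pose V := {ffun 'I_d -> 'I_n}.
pose P := (ptype d n L * 'I_d * 'I_n)%type.
pose BadS := fun p : P => [set c : sample k delta | feasible p.1.1 p.1.2 p.2 &&
   (sk < mcnt p.1.1 c) && (hcnt p.1.1 p.1.2 p.2 c < eps * mcnt p.1.1 c / 2)].
set G := [set c : sample k delta | `[< good_event c >]].
have sub : forall c, c \in ~: G -> exists p : P, c \in BadS p.
  move=> c; rewrite !inE => /asboolPn ng.
  apply: contrapT => nb; apply: ng.
  apply: (good_of eps0 (L := L)) => [pi hpi|tau b g fe hm]; first exact: HL.
  rewrite leNgt; apply/negP => hlt; apply: nb; exists (tau, b, g).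
  by rewrite inE /= fe hm hlt.
pose E := expR (- (eps / 25 * sk)) * (#|V|%:R) ^+ k.
have bnd : forall p : P, (#|BadS p|%:R : R) <= E.
  case=> [[tau b g]]; rewrite /BadS /=.
  case fe: (feasible tau b g); last first.
    rewrite (_ : [set _ | _] = set0); first by rewrite cards0 /E mulr_ge0 // ?expR_ge0 // exprn_ge0.
    by apply/setP => c; rewrite !inE.
  have hit : forall v, inbox tau v && (v b == g) -> inbox tau v by move=> v /andP [].
  have := @chernoff R V (inbox tau) (fun v => inbox tau v && (v b == g)) k n eps sk hit (card_box fe) eps0 eps8 neps.
  apply: le_trans; rewrite ler_nat; apply: subset_leq_card; apply/subsetP => c; rewrite !inE /=.
  by rewrite /mcnt /hcnt.
have cnot : (#|~: G|%:R : R) <= #|{: ptype d n L * 'I_d * 'I_n}|%:R * E.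
  apply: (@le_trans _ _ ((\sum_(p : ptype d n L * 'I_d * 'I_n) #|BadS p|)%:R)).
    by rewrite ler_nat; apply: card_le_sum.
  rewrite natr_sum; apply: le_trans (ler_sum _ (fun p _ => bnd p)) _.
  by rewrite sumr_const mulr_natl.
have cardP : #|{: ptype d n L * 'I_d * 'I_n}| = ((d * n.+1 * 2).+1 ^ L * d * n)%N.
  by rewrite !card_prod card_ffun card_option !card_prod !card_ord card_bool.
have cardT : #|[set: sample k delta]| = (#|V| ^ k)%N.
  by rewrite cardsT card_ffun card_ord.
have cG := cardsC G.
have K0 : (0 : R) < k%:R by rewrite ltr0n; apply: leq_trans hk.
set TT : R := (#|V|%:R) ^+ k.
have TT0 : 0 <= TT by apply: exprn_ge0.
have eT : (#|[set: sample k delta]|%:R : R) = TT by rewrite cardT natrX.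
have eG : (#|G|%:R : R) = TT - #|~: G|%:R.
  rewrite -eT cardsT -cG natrD; ring.
rewrite eT eG.
set a := ((d * n.+1 * 2).+1%:R ^+ L * d%:R * n%:R) * expR (- (eps / 25 * sk)).
have ha : a <= 1 / k%:R.
  by rewrite ler_pdivlMr // mulrC /a mulrA.
have hc : (#|~: G|%:R : R) <= a * TT.
  apply: le_trans cnot _; rewrite cardP natrM natrM natrX /a /E -/TT; by rewrite !mulrA.
have : a * TT <= 1 / k%:R * TT by apply: ler_wpM2r.
lra.
Qed.
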